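(* Consider the hidden factor model described in the context and suppose Assumptions 1–3 hold. Then for every $j=1,\dots,p$: (i) $\Theta_{j,j}=1/\tau_j^2$ with $$\tau_j^2=(\bar a_j'\bar a_j+\sigma_j^2)-\bar a_j'\bar A_{-j}'\Sigma_{U,-j}^{-1}\bar A_{-j}\bar G_j^{-1}\bar a_j;$$ (ii) $\Theta_{j,-j}=-\alpha_j^{*\prime}/\tau_j^2$ with $\alpha_j^*=\Sigma_{U,-j}^{-1}\bar A_{-j}\bar G_j^{-1}\bar a_j$; (iii) consequently the $j$th row of $\Theta$ is $\big(1/\tau_j^2,\,-\alpha_j^{*\prime}/\tau_j^2\big)$ (with entry $j$ placed first), and stacking these rows over $j=1,\dots,p$ gives $\Theta$.
   Context: Data: $Y=FA+U$ with $Y\in\mathbb R^{n\times p}$ (rows $y_t'$, $t=1,\dots,n$), $F\in\mathbb R^{n\times K}$ (rows $f_t'$, hidden factors), $A\in\mathbb R^{K\times p}$ (loadings), $U\in\mathbb R^{n\times p}$ (rows $u_t'$). For each $j$ write (after reordering) $A=[a_j,A_{-j}']$ with $a_j\in\mathbb R^K$, $A_{-j}\in\mathbb R^{(p-1)\times K}$, so that $y_{jt}=f_t'a_j+u_{jt}$ and $Y_{-jt}=A_{-j}f_t+U_{-jt}\in\mathbb R^{p-1}$ (all outcomes except $j$). Let $\sigma_j^2=\mathrm{var}(u_{jt})$, $\Sigma_{U,-j}=\mathrm{var}(U_{-jt})$, $\Sigma_f=\mathrm{cov}(f_t)$, $\mu_j=Ey_{jt}$, $\mu_{-j}=EY_{-jt}$,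 $\Sigma=E(y_t-Ey_t)(y_t-Ey_t)'$, $\Theta=\Sigma^{-1}$; $\Theta_{j,j}$ is its $j$th diagonal entry and $\Theta_{j,-j}$ its $j$th row with entry $j$ removed. Define $\alpha_j^*=\arg\min_{\alpha\in\mathbb R^{p-1}}E[(y_{jt}-\mu_j)-(Y_{-jt}-\mu_{-j})'\alpha]^2$, $\Sigma_f^{1/2}$ the symmetric square root, $\bar A_{-j}=A_{-j}\Sigma_f^{1/2}$, $\bar a_j=\Sigma_f^{1/2}a_j$, $\bar G_j=I_K+\bar A_{-j}'\Sigma_{U,-j}^{-1}\bar A_{-j}$. Assumption 1: for each $j$, $(y_{jt},Y_{-jt})$ are iid over $t$; $u_{jt},U_{-jt}$ are zero mean and iid over $t$; $f_t$ iid over $t$; $f_t,u_{jt},U_{-jt}$ are mutually independent. Assumption 2: (i) $\min_j\lambda_{\min}(\Sigma_{U,-j})\ge c>0$, $\max_j\sigma_j^2=\sigma^2\le C<\infty$, $\min_j\sigma_j^2\ge c>0$; (ii) $\delta_n:=\min_j\|\Sigma_{U,-j}\|_2$ and $r_n:=\max_j\|\Sigma_{U,-j}\|_2$ are nondecreasing in $n$ and $r_n/p\to0$. Assumption 3: (i) $p\le n^{C_p/2}$ for a constant $C_p>0$; (ii) for each $j$, $A_{-j}$ has full rank $K$, $p>K+1$, $\max_j\|A_{-j}\|_2=O(d_{1n})$ with $d_{1n}\to\infty$ and $d_{1n}/\sqrt p\to0$; $\Sigma_f$ has full rank $K$ and $\lambda_{\max}(\Sigma_f)\le C<\infty$. 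*)

(* Defs.v *)
From HB Require Import structures.
From mathcomp Require Import all_boot all_order all_algebra.
From mathcomp Require Import all_classical all_reals all_analysis.
Set Implicit Arguments. Unset Strict Implicit. Unset Printing Implicit Defensive.
Import Order.TTheory GRing.Theory Num.Theory.
Local Open Scope ring_scope.

Definition covmx d (T : measurableType d) (R : realType) (P : probability T R)
  (n : nat) (X : 'I_n -> T -> R) : 'M[R]_n :=
  \matrix_(i, k) fine (covariance P (X i) (X k)).

(* The factor model for one observation t:  y_i = sum_k A_{k i} f_k + u_i,
   i.e. y_t = A' f_t + u_t  (rows of Y = F A + U). *)
Definition model_y d (T : measurableType d) (R : realType) (K m : nat)
  (A : 'M[R]_(K, m)) (f : 'I_K -> T -> R) (u : 'I_m -> T -> R) :
  'I_m -> T -> R :=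
  fun i w => \sum_(k < K) A k i * f k w + u i w.

Definition pred_risk d (T : measurableType d) (R : realType) (P : probability T R)
  (p : nat) (y : 'I_p.+1 -> T -> R) (j : 'I_p.+1) (alpha : 'cV[R]_p) : \bar R :=
  'E_P[fun w => ((y j w - fine 'E_P[y j]) -
        \sum_(i < p) (y (lift j i) w - fine 'E_P[y (lift j i)]) * alpha i 0) ^+ 2].

Definition is_argmin_risk d (T : measurableType d) (R : realType) (P : probability T R)
  (p : nat) (y : 'I_p.+1 -> T -> R) (j : 'I_p.+1) (alpha : 'cV[R]_p) : Prop :=
  forall beta : 'cV[R]_p, (pred_risk P y j alpha <= pred_risk P y j beta)%E.

Definition qform (R : ringType) (n : nat) (M : 'M[R]_n) (v : 'cV[R]_n) : R :=
  (v^T *m M *m v) 0 0.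

Definition psd_mx (R : realFieldType) (n : nat) (M : 'M[R]_n) : Prop :=
  forall v : 'cV[R]_n, 0 <= qform M v.

(* Main.v *)
Require Import Defs.
From HB Require Import structures.
From mathcomp Require Import all_boot all_order all_algebra.
From mathcomp Require Import all_classical all_reals all_analysis.
From mathcomp Require Import lra.
Import Order.TTheory GRing.Theory Num.Theory.
Local Open Scope ring_scope.


Section LA.
Set Implicit Arguments. Unset Strict Implicit.
Variable R : realFieldType.

Lemma row'_mulmx m n q (i : 'I_m) (M : 'M[R]_(m, n)) (N : 'M[R]_(n, q)) :
  row' i (M *m N) = row' i M *m N.
Proof. by apply/matrixP => a b; rewrite !mxE; apply: eq_bigr => k _; rewrite !mxE. Qed.

Lemma col'_mulmx m n q (i : 'I_q) (M : 'M[R]_(m, n)) (N : 'M[R]_(n, q)) :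
  col' i (M *m N) = M *m col' i N.
Proof. by apply/matrixP => a b; rewrite !mxE; apply: eq_bigr => k _; rewrite !mxE. Qed.

Lemma col_mulmx m n q (i : 'I_q) (M : 'M[R]_(m, n)) (N : 'M[R]_(n, q)) :
  col i (M *m N) = M *m col i N.
Proof. by apply/matrixP => a b; rewrite !mxE; apply: eq_bigr => k _; rewrite !mxE. Qed.

Lemma row_mulmx m n q (i : 'I_m) (M : 'M[R]_(m, n)) (N : 'M[R]_(n, q)) :
  row i (M *m N) = row i M *m N.
Proof. by apply/matrixP => a b; rewrite !mxE; apply: eq_bigr => k _; rewrite !mxE. Qed.

Lemma vtvE n (v : 'cV[R]_n) : (v^T *m v) 0 0 = \sum_i v i 0 ^+ 2.
Proof. by rewrite mxE; apply: eq_bigr => i _; rewrite !mxE expr2. Qed.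

Lemma vtv_ge0 n (v : 'cV[R]_n) : 0 <= (v^T *m v) 0 0.
Proof. by rewrite vtvE; apply: sumr_ge0 => i _; rewrite sqr_ge0. Qed.

Lemma vtv_eq0 n (v : 'cV[R]_n) : (v^T *m v) 0 0 = 0 -> v = 0.
Proof.
rewrite vtvE => /eqP; rewrite psumr_eq0; last by move=> i _; rewrite sqr_ge0.
move=> /allP H; apply/matrixP => i z; rewrite (ord1 z) mxE.
by have /(_ (mem_index_enum i)) := H i; rewrite sqrf_eq0 => /eqP.
Qed.

Lemma pd_unit n (M : 'M[R]_n) c : 0 < c ->
  (forall v, c * (v^T *m v) 0 0 <= qform M v) -> M \in unitmx.
Proof.
move=> c0 H; rewrite unitmxE unitfE; apply/negP => /det0P [v v0 vM].
have h1 : qform M v^T = 0 by rewrite /qform trmxK vM mul0mx mxE.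
have := H v^T; rewrite h1 => le0.
have : (v^T^T *m v^T) 0 0 = 0.
  apply/eqP; rewrite eq_le vtv_ge0 andbT.
  by rewrite -(pmulr_rle0 _ c0).
move/vtv_eq0 => /(congr1 trmx); rewrite trmxK trmx0 => v0'.
by rewrite v0' eqxx in v0.
Qed.

Lemma qform_inv_ge0 n (M : 'M[R]_n) c : 0 < c -> M^T = M ->
  (forall v, c * (v^T *m v) 0 0 <= qform M v) ->
  forall w, 0 <= qform (invmx M) w.
Proof.
move=> c0 sM H w; have uM := pd_unit c0 H.
have -> : qform (invmx M) w = qform M (invmx M *m w).
  rewrite /qform trmx_mul trmx_inv sM -!mulmxA (mulmxA M) mulmxV //.
  by rewrite mul1mx.
apply: le_trans (H _); apply: mulr_ge0; [exact: ltW | exact: vtv_ge0].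
Qed.


Lemma mxEB m n (X Y : 'M[R]_(m, n)) i k : (X - Y) i k = X i k - Y i k.
Proof. by rewrite !mxE. Qed.
Lemma mxED m n (X Y : 'M[R]_(m, n)) i k : (X + Y) i k = X i k + Y i k.
Proof. by rewrite !mxE. Qed.
Lemma row'D m n (X Y : 'M[R]_(m, n)) i : row' i (X + Y) = row' i X + row' i Y.
Proof. by apply/matrixP => a b; rewrite !mxE. Qed.
Lemma col'D m n (X Y : 'M[R]_(m, n)) i : col' i (X + Y) = col' i X + col' i Y.
Proof. by apply/matrixP => a b; rewrite !mxE. Qed.
Lemma colD m n (X Y : 'M[R]_(m, n)) i : col i (X + Y) = col i X + col i Y.
Proof. by apply/matrixP => a b; rewrite !mxE. Qed.

Definition wvec p (j : 'I_p.+1) (al : 'cV[R]_p) : 'cV[R]_p.+1 :=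
  \col_l (if unlift j l is Some i then - al i 0 else 1).

Lemma wvec_j p (j : 'I_p.+1) al : wvec j al j 0 = 1.
Proof. by rewrite /wvec mxE unlift_none. Qed.
Lemma wvec_lift p (j : 'I_p.+1) al i : wvec j al (lift j i) 0 = - al i 0.
Proof. by rewrite /wvec mxE liftK. Qed.

Section Main.
Variables (p K : nat) (A : 'M[R]_(K, p.+1)) (Sfh : 'M[R]_K) (U : 'M[R]_p.+1) (c : R).
Hypotheses (c0 : 0 < c) (hUs : U^T = U) (hUoff : forall i k, i != k -> U i k = 0)
  (hSU : forall (j : 'I_p.+1) (v : 'cV[R]_p), c * (v^T *m v) 0 0 <= qform (row' j (col' j U)) v)
  (hsig : forall j, c <= U j j) (hSfh : Sfh^T = Sfh).

Lemma row_identity (j : 'I_p.+1) :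
  let Sig := A^T *m (Sfh *m Sfh) *m A + U in
  let SUj := row' j (col' j U) in
  let sig2 := U j j in
  let abar := Sfh *m col j A in
  let Abar := (col' j A)^T *m Sfh in
  let G := 1%:M + Abar^T *m invmx SUj *m Abar in
  let tau2 := (abar^T *m abar) 0 0 + sig2
              - (abar^T *m Abar^T *m invmx SUj *m Abar *m invmx G *m abar) 0 0 in
  let alpha := invmx SUj *m Abar *m invmx G *m abar in
  [/\ 0 < tau2, (wvec j alpha)^T *m Sig = tau2 *: delta_mx 0 j,
      forall v, c * (v^T *m v) 0 0 <= qform (row' j (col' j Sig)) v & Sig^T = Sig].
Proof.
move=> Sig SUj sig2 abar Abar G tau2 alpha.
have Ss : SUj^T = SUj.
  by rewrite /SUj tr_row' tr_col' hUs; apply/matrixP => a b; rewrite !mxE.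
have uS : SUj \in unitmx := pd_unit c0 (hSU j).
have Gs : G^T = G.
  by rewrite /G linearD /= trmx1 !trmx_mul trmx_inv Ss !trmxK /Abar !mulmxA.
have Gpd : forall v, 1 * (v^T *m v) 0 0 <= qform G v.
  move=> v.
  have -> : qform G v = (v^T *m v) 0 0 + qform (invmx SUj) (Abar *m v).
    by rewrite /qform /G mulmxDr mulmx1 mulmxDl mxED [(Abar *m v)^T]trmx_mul !mulmxA.
  by rewrite mul1r lerDl (qform_inv_ge0 c0 Ss (hSU j)).
have uG := pd_unit ltr01 Gpd.
have key : Abar^T *m invmx SUj *m Abar = G - 1%:M by rewrite /G (addrC 1%:M) addrK.
have Sm_eq : row' j (col' j Sig) = Abar *m Abar^T + SUj.
  rewrite /Sig col'D row'D col'_mulmx !row'_mulmx -tr_col' /Abar trmx_mul hSfh trmxK.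
  by rewrite !mulmxA.
have s_eq : row' j (col j Sig) = Abar *m abar.
  rewrite /Sig colD row'D col_mulmx !row'_mulmx -tr_col' /Abar /abar.
  have -> : row' j (col j U) = 0.
    by apply/matrixP => a b; rewrite !mxE hUoff // eq_sym neq_lift.
  by rewrite addr0 !mulmxA.
have jj_eq : Sig j j = (abar^T *m abar) 0 0 + U j j.
  rewrite /Sig mxED; congr (_ + _).
  have -> : forall M : 'M[R]_p.+1, M j j = (row j (col j M)) 0 0 by move=> M; rewrite !mxE.
  rewrite col_mulmx !row_mulmx -tr_col /abar trmx_mul hSfh.
  by rewrite !mulmxA.
have Sigs : Sig^T = Sig.
  by rewrite /Sig linearD /= hUs !trmx_mul !hSfh trmxK !mulmxA.
have alpha_eq : row' j (col' j Sig) *m alpha = row' j (col j Sig).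
  rewrite Sm_eq s_eq /alpha.
  transitivity (Abar *m ((Abar^T *m invmx SUj *m Abar + 1%:M) *m invmx G *m abar)).
    by rewrite !mulmxDl !mulmxDr !mulmxA mulmxV // mul1mx mulmx1.
  by rewrite key subrK mulmxV // mul1mx.
have tau_eq : tau2 = U j j + qform (invmx G) abar.
  have e1 : abar^T *m Abar^T *m invmx SUj *m Abar = abar^T *m (G - 1%:M).
    by rewrite -key !mulmxA.
  rewrite /tau2 e1 mulmxBr mulmx1 !mulmxBl -(mulmxA abar^T G) mulmxV // mulmx1.
  rewrite mxEB /qform /sig2; lra.
have tau_pos : 0 < tau2.
  rewrite tau_eq; apply: (lt_le_trans c0); rewrite -[c]addr0; apply: lerD => //.
  exact: (qform_inv_ge0 ltr01 Gs Gpd).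
have s_alpha : (abar^T *m Abar^T *m invmx SUj *m Abar *m invmx G *m abar) 0 0
    = ((row' j (col j Sig))^T *m alpha) 0 0.
  by rewrite s_eq [(Abar *m abar)^T]trmx_mul /alpha !mulmxA.
have Smpd : forall v, c * (v^T *m v) 0 0 <= qform (row' j (col' j Sig)) v.
  move=> v; rewrite Sm_eq /qform mulmxDr mulmxDl mxED -[c * _]add0r.
  apply: lerD; last exact: (hSU j v).
  rewrite !mulmxA; have := vtv_ge0 (Abar^T *m v); rewrite [(Abar^T *m v)^T]trmx_mul trmxK !mulmxA; exact.
split => //.
have Ssym : forall a b, Sig a b = Sig b a by move=> a b; rewrite -{1}Sigs mxE.
clearbody Sig.
apply/matrixP => z k; rewrite (ord1 z) mxE [RHS]mxE [in RHS]mxE.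
rewrite (bigD1_ord j) //= !mxE unlift_none mul1r.
under eq_bigr => i _ do rewrite !mxE liftK.
case: (unliftP j k) => [i' ->|->].
  rewrite eq_sym (negbTE (neq_lift j i')) mulr0.
  have := congr1 (fun M : 'cV[R]_p => M i' 0) alpha_eq; rewrite !mxE.
  rewrite (Ssym j) => <-.
  rewrite -big_split /=; apply: big1 => i _.
  by rewrite !mxE (Ssym (lift j i)) mulNr mulrC addrN.
rewrite eqxx mulr1 /tau2 s_alpha jj_eq /sig2 [((row' j _)^T *m alpha) 0 0]mxE -sumrN.
congr (_ + _); apply: eq_bigr => i _; rewrite !mxE mulNr mulrC //.
Qed.

End Main.

Lemma qformE n (M : 'M[R]_n) v :
  qform M v = \sum_l \sum_m v l 0 * v m 0 * M l m.
Proof.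
rewrite /qform mxE.
under eq_bigr => m _ do rewrite mxE mulr_suml.
rewrite exchange_big; apply: eq_bigr => l _; apply: eq_bigr => m _; rewrite !mxE.
by rewrite mulrAC.
Qed.

Lemma qform_split p (Sig : 'M[R]_p.+1) j (a d : 'cV[R]_p.+1) (v : 'cV[R]_p) tau :
  a^T *m Sig = tau *: delta_mx 0 j -> Sig^T = Sig -> d j 0 = 0 ->
  (forall i, d (lift j i) 0 = v i 0) ->
  qform Sig (a + d) = qform Sig a + qform (row' j (col' j Sig)) v.
Proof.
move=> aS sS dj dl.
have h1 : (a^T *m Sig *m d) 0 0 = 0.
  by rewrite aS -scalemxAl -rowE mxE mxE dj mulr0.
have h2 : (d^T *m Sig *m a) 0 0 = 0.
  have t : forall M : 'M[R]_1, M 0 0 = M^T 0 0 by move=> M; rewrite mxE.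
  rewrite t.
  by rewrite !trmx_mul trmxK sS mulmxA h1.
rewrite /qform [(a + d)^T]linearD /= !mulmxDl !mulmxDr !mxED h1 h2 addr0 add0r; congr (_ + _).
rewrite -/(qform Sig d) -/(qform _ v) !qformE (bigD1_ord j) //= big1 ?add0r.
  apply: eq_bigr => l _; rewrite (bigD1_ord j) //= dl dj mulr0 mul0r add0r.
  by apply: eq_bigr => m _; rewrite !dl !mxE.
by move=> m _; rewrite dj !mul0r.
Qed.

Definition SUj_of p (U : 'M[R]_p.+1) (j : 'I_p.+1) := row' j (col' j U).
Definition abar_of K p (A : 'M[R]_(K, p.+1)) (Sfh : 'M[R]_K) (j : 'I_p.+1) := Sfh *m col j A.
Definition Abar_of K p (A : 'M[R]_(K, p.+1)) (Sfh : 'M[R]_K) (j : 'I_p.+1) := (col' j A)^T *m Sfh.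
Definition G_of K p (A : 'M[R]_(K, p.+1)) (Sfh : 'M[R]_K) (U : 'M[R]_p.+1) (j : 'I_p.+1) :=
  1%:M + (Abar_of A Sfh j)^T *m invmx (SUj_of U j) *m Abar_of A Sfh j.
Definition tau2_of K p (A : 'M[R]_(K, p.+1)) (Sfh : 'M[R]_K) (U : 'M[R]_p.+1) (j : 'I_p.+1) :=
  ((abar_of A Sfh j)^T *m abar_of A Sfh j) 0 0 + U j j
  - ((abar_of A Sfh j)^T *m (Abar_of A Sfh j)^T *m invmx (SUj_of U j) *m Abar_of A Sfh j
     *m invmx (G_of A Sfh U j) *m abar_of A Sfh j) 0 0.
Definition alpha_of K p (A : 'M[R]_(K, p.+1)) (Sfh : 'M[R]_K) (U : 'M[R]_p.+1) (j : 'I_p.+1) :=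
  invmx (SUj_of U j) *m Abar_of A Sfh j *m invmx (G_of A Sfh U j) *m abar_of A Sfh j.

Lemma row_identity' p K (A : 'M[R]_(K, p.+1)) (Sfh : 'M[R]_K) (U : 'M[R]_p.+1) (c : R)
  (c0 : 0 < c) (hUs : U^T = U) (hUoff : forall i k, i != k -> U i k = 0)
  (hSU : forall (j : 'I_p.+1) (v : 'cV[R]_p), c * (v^T *m v) 0 0 <= qform (row' j (col' j U)) v)
  (hsig : forall j, c <= U j j) (hSfh : Sfh^T = Sfh) (j : 'I_p.+1) :
  [/\ 0 < tau2_of A Sfh U j,
      (wvec j (alpha_of A Sfh U j))^T *m (A^T *m (Sfh *m Sfh) *m A + U)
        = tau2_of A Sfh U j *: delta_mx 0 j,
      forall v, c * (v^T *m v) 0 0 <= qform (row' j (col' j (A^T *m (Sfh *m Sfh) *m A + U))) v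
    & (A^T *m (Sfh *m Sfh) *m A + U)^T = A^T *m (Sfh *m Sfh) *m A + U].
Proof. exact: (@row_identity p K A Sfh U c c0 hUs hUoff hSU hsig hSfh j). Qed.

End LA.

Section Ana.
Set Implicit Arguments. Unset Strict Implicit.
Context d (T : measurableType d) (R : realType) (P : probability T R).
Local Notation L2 := (Lfun P 2%:E).

Lemma two1 : (1 <= (2%:E : \bar R))%E.
Proof. by rewrite lee_fin ler1n. Qed.

Lemma L2D (f g : T -> R) : f \in L2 -> g \in L2 -> (f \+ g) \in L2.
Proof. by move=> hf hg; rewrite rpredD //; exact: two1. Qed.

Lemma L2Z (a : R) (f : T -> R) : f \in L2 -> (a \o* f) \in L2.
Proof. by move=> hf; apply: Lfun_scale => //; rewrite ler1n. Qed.

Lemma L2cst (a : R) : cst a \in L2.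
Proof. exact: Lfun_cst. Qed.

Lemma L2B (f g : T -> R) : f \in L2 -> g \in L2 -> (f \- g) \in L2.
Proof. by move=> hf hg; rewrite rpredB //; exact: two1. Qed.

Lemma L2sum n (F : 'I_n -> T -> R) : (forall i, F i \in L2) ->
  (fun w => \sum_i F i w) \in L2.
Proof.
move=> h; have -> : (fun w => \sum_i F i w) = \sum_i F i.
  by apply/funext => w; rewrite fct_sumE.
by rewrite rpred_sum //; exact: two1.
Qed.

Lemma L2L1 (f : T -> R) : f \in L2 -> f \in Lfun P 1.
Proof. by apply: Lfun_subset12; exact: fin_num_measure. Qed.

Definition covR (X Y : T -> R) := fine (covariance P X Y).

Lemma cov_fin X Y : X \in L2 -> Y \in L2 -> covariance P X Y = (covR X Y)%:E.
Proof.
move=> hX hY; rewrite /covR fineK //.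
by apply: covariance_fin_num; [exact: L2L1|exact: L2L1|exact: Lfun2_mul_Lfun1].
Qed.

Lemma covR_Dl X Y Z : X \in L2 -> Y \in L2 -> Z \in L2 ->
  covR (X \+ Y) Z = covR X Z + covR Y Z.
Proof.
by move=> hX hY hZ; rewrite {1}/covR covarianceDl // (cov_fin hX hZ) (cov_fin hY hZ).
Qed.

Lemma covR_Zl a X Y : X \in L2 -> Y \in L2 -> covR (a \o* X) Y = a * covR X Y.
Proof.
move=> hX hY; rewrite {1}/covR covarianceZl ?(cov_fin hX hY) //.
- exact: L2L1.
- exact: L2L1.
- exact: Lfun2_mul_Lfun1.
Qed.

Lemma covR_C X Y : covR X Y = covR Y X.
Proof. by rewrite /covR covarianceC. Qed.

Lemma covR_cstBl X m Y : X \in L2 -> Y \in L2 -> covR (X \- cst m) Y = covR X Y.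
Proof.
move=> hX hY; rewrite {1}/covR covarianceBl ?L2cst // covariance_cst_l.
by rewrite (cov_fin hX hY) sube0.
Qed.

Lemma covR_suml n (F : 'I_n -> T -> R) Z : (forall i, F i \in L2) -> Z \in L2 ->
  covR (fun w => \sum_i F i w) Z = \sum_i covR (F i) Z.
Proof.
elim: n F => [|n IH] F hF hZ.
  have -> : (fun w => \sum_(i < 0) F i w) = cst 0.
    by apply/funext => w; rewrite big_ord0.
  by rewrite big_ord0 /covR covariance_cst_l.
have -> : (fun w => \sum_(i < n.+1) F i w) =
    (fun w => \sum_(i < n) F (widen_ord (leqnSn n) i) w) \+ F ord_max.
  by apply/funext => w; rewrite big_ord_recr.
rewrite covR_Dl //; last exact: L2sum.
by rewrite IH // big_ord_recr.
Qed.

Lemma E_sum n (F : 'I_n -> T -> R) : (forall i, F i \in L2) ->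
  ('E_P[(fun w => \sum_i F i w)%R])%E = (\sum_i fine 'E_P[F i])%:E.
Proof.
elim: n F => [|n IH] F hF.
  have -> : (fun w => \sum_(i < 0) F i w) = cst 0.
    by apply/funext => w; rewrite big_ord0.
  by rewrite big_ord0 expectation_cst.
have -> : (fun w => \sum_(i < n.+1) F i w) =
    (fun w => \sum_(i < n) F (widen_ord (leqnSn n) i) w) \+ F ord_max.
  by apply/funext => w; rewrite big_ord_recr.
rewrite expectationD; [|exact/L2L1/L2sum|exact/L2L1].
rewrite IH // big_ord_recr /= EFinD fineK //.
exact/expectation_fin_num/L2L1.
Qed.

Lemma risk_eq n (X : 'I_n -> T -> R) (wt : 'I_n -> R) : (forall l, X l \in L2) ->
  ('E_P[(fun w => (\sum_l (X l w - fine 'E_P[X l]) * wt l) ^+ 2)%R])%E =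
  (\sum_l \sum_m wt l * wt m * covR (X l) (X m))%:E.
Proof.
move=> hX.
pose G := fun l => wt l \o* (X l \- cst (fine 'E_P[X l])).
have hG : forall l, G l \in L2 by move=> l; apply/L2Z/L2B => //; exact: L2cst.
pose Z := fun w => \sum_l G l w.
have hZ : Z \in L2 by exact: L2sum.
have -> : (fun w => (\sum_l (X l w - fine 'E_P[X l]) * wt l) ^+ 2) = (Z \* Z).
  by apply/funext => w; rewrite /= expr2.
have EZ : ('E_P[Z] = 0)%E.
  rewrite /Z E_sum // big1 // => l _.
  rewrite /G expectationZl; last exact/L2L1/L2B/L2cst.
  rewrite expectationB; [|exact/L2L1|exact/L2L1/L2cst].
  have fE : ('E_P[X l])%E \is a fin_num by exact/expectation_fin_num/L2L1.
  by rewrite expectation_cst fineK // subee // mule0.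
have : covariance P Z Z = ('E_P[(Z \* Z)%R])%E.
  rewrite covarianceE; [|exact/L2L1|exact/L2L1|exact: Lfun2_mul_Lfun1].
  by rewrite EZ mule0 sube0.
move=> <-; rewrite (cov_fin hZ hZ); congr EFin.
rewrite /Z covR_suml //; apply: eq_bigr => l _.
rewrite /G covR_Zl; last exact: hZ.
  2: exact/L2B/L2cst.
rewrite covR_cstBl // covR_C covR_suml // mulr_sumr.
apply: eq_bigr => m _; rewrite /G covR_Zl ?covR_cstBl //; last exact/L2B/L2cst.
by rewrite (covR_C (X m)) mulrA.
Qed.


Lemma covR_lin_l n (a : 'I_n -> R) (F : 'I_n -> T -> R) Y :
  (forall k, F k \in L2) -> Y \in L2 ->
  covR (fun w => \sum_k (a k \o* F k) w) Y = \sum_k a k * covR (F k) Y.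
Proof.
move=> hF hY; rewrite covR_suml //; last by move=> k; exact: L2Z.
by apply: eq_bigr => k _; rewrite covR_Zl.
Qed.

Lemma covmx_y K m (A : 'M[R]_(K, m)) (f : 'I_K -> T -> R) (u : 'I_m -> T -> R) :
  (forall k, f k \in L2) -> (forall i, u i \in L2) ->
  (forall k i, covariance P (f k) (u i) = 0%E) ->
  covmx P (model_y A f u) = A^T *m covmx P f *m A + covmx P u.
Proof.
move=> hf hu hfu.
pose S i := fun w => \sum_k (A k i \o* f k) w.
have hS : forall i, S i \in L2 by move=> i; apply: L2sum => k; exact: L2Z.
have ey : forall i, model_y A f u i = S i \+ u i.
  move=> i; apply/funext => w; rewrite /model_y /S /=; congr (_ + _).
  by apply: eq_bigr => k _; rewrite mulrC.
have hy : forall i, model_y A f u i \in L2 by move=> i; rewrite ey; exact: L2D.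
have cfu : forall k i, covR (f k) (u i) = 0 by move=> k i; rewrite /covR hfu.
apply/matrixP => i l; rewrite [LHS]mxE -/(covR _ _) [RHS]mxE.
rewrite [covmx P u i l]mxE -/(covR _ _).
have cS : forall i Y, Y \in L2 -> covR (S i) Y = \sum_k A k i * covR (f k) Y.
  by move=> i' Y hY; exact: covR_lin_l.
have hSu : forall i, S i \+ u i \in L2 by move=> i'; exact: L2D.
rewrite !ey covR_Dl // cS //.
have z : forall l' i', covR (S l') (u i') = 0.
  by move=> l' i'; rewrite cS // big1 // => k _; rewrite cfu mulr0.
rewrite (covR_C (u i)) covR_Dl // z.
rewrite add0r (covR_C (u l)); congr (_ + _).
rewrite mxE; under [RHS]eq_bigr => m' _ do rewrite mxE mulr_suml.
rewrite exchange_big /=; apply: eq_bigr => k _.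
rewrite covR_C covR_Dl // cS // (covR_C (u l)) cfu addr0 mulr_sumr.
apply: eq_bigr => m' _; rewrite !mxE -/(covR _ _) covR_C.
by rewrite mulrA mulrAC.
Qed.


Lemma model_y_L2 K m (A : 'M[R]_(K, m)) (f : 'I_K -> T -> R) (u : 'I_m -> T -> R) :
  (forall k, f k \in L2) -> (forall i, u i \in L2) -> forall i, model_y A f u i \in L2.
Proof.
move=> hf hu i.
have -> : model_y A f u i = (fun w => \sum_k (A k i \o* f k) w) \+ u i.
  apply/funext => w; rewrite /model_y /=; congr (_ + _).
  by apply: eq_bigr => k _; rewrite mulrC.
by apply: L2D => //; apply: L2sum => k; exact: L2Z.
Qed.

End Ana.

Theorem lemma1 (R : realType) (d : measure_display) (T : measurableType d)
  (P : probability T R) (K p : nat)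
  (A : 'M[R]_(K, p.+1)) (f : 'I_K -> T -> R) (u : 'I_p.+1 -> T -> R)
  (Sfh : 'M[R]_K) (c C : R)
  (* square-integrable factors and errors *)
  (hf : forall k, f k \in Lfun P 2%:E) (hu : forall i, u i \in Lfun P 2%:E)
  (* zero-mean errors *)
  (hu0 : forall i, ('E_P[u i] = 0)%E)
  (* Assumption 1 (mutual independence), used through uncorrelatedness *)
  (hfu : forall k i, covariance P (f k) (u i) = 0%E)
  (huu : forall i i', i != i' -> covariance P (u i) (u i') = 0%E)
  (* Assumption 2(i) *)
  (hc : 0 < c) (hC : 0 < C)
  (hSU : forall j : 'I_p.+1, forall v : 'cV[R]_p,
      c * (v^T *m v) 0 0 <= qform (row' j (col' j (covmx P u))) v)
  (hsig : forall j : 'I_p.+1, c <= covmx P u j j /\ covmx P u j j <= C)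
  (* Assumption 3(ii) (non-asymptotic part) *)
  (hrk : forall j : 'I_p.+1, \rank (col' j A)^T = K)
  (hpK : (K.+1 < p.+1)%N)
  (hSf_rk : \rank (covmx P f) = K)
  (hSf_max : forall v : 'cV[R]_K, qform (covmx P f) v <= C * (v^T *m v) 0 0)
  (* Sfh is the symmetric square root of Sigma_f *)
  (hSfh_sym : Sfh^T = Sfh) (hSfh_psd : psd_mx Sfh)
  (hSfh_sq : Sfh *m Sfh = covmx P f) :
  forall j : 'I_p.+1,
  let y := model_y A f u in
  let Theta := invmx (covmx P y) in
  let SUj := row' j (col' j (covmx P u)) in
  let sig2 := covmx P u j j in
  let abar := Sfh *m col j A in
  let Abar := (col' j A)^T *m Sfh in
  let G := 1%:M + Abar^T *m invmx SUj *m Abar in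
  let tau2 := (abar^T *m abar) 0 0 + sig2
              - (abar^T *m Abar^T *m invmx SUj *m Abar *m invmx G *m abar) 0 0 in
  let alpha := invmx SUj *m Abar *m invmx G *m abar in
  Theta j j = 1 / tau2 /\
  (forall a0 : 'cV[R]_p, is_argmin_risk P y j a0 <-> a0 = alpha) /\
  col' j (row j Theta) = - (1 / tau2) *: alpha^T.
Proof.
move=> j y Theta SUj sig2 abar Abar G tau2 alpha.
have hy_eq : covmx P y = A^T *m (Sfh *m Sfh) *m A + covmx P u.
  by rewrite /y covmx_y // hSfh_sq.
have hUs : (covmx P u)^T = covmx P u.
  by apply/matrixP => a b; rewrite !mxE covarianceC.
have hUoff : forall i k, i != k -> covmx P u i k = 0.
  by move=> i k ik; rewrite mxE huu.
have hsig' : forall j', c <= covmx P u j' j' by move=> j'; case: (hsig j').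
have RI := @row_identity' _ p K A Sfh (covmx P u) c hc hUs hUoff hSU hsig' hSfh_sym.
pose Sig := A^T *m (Sfh *m Sfh) *m A + covmx P u.
have eT : tau2 = tau2_of A Sfh (covmx P u) j by [].
have eA : alpha = alpha_of A Sfh (covmx P u) j by [].
have eTh : Theta = invmx Sig by rewrite /Theta hy_eq.
rewrite eT eA eTh.
pose Rm := \matrix_(j' < p.+1)
  ((1 / tau2_of A Sfh (covmx P u) j') *: (wvec j' (alpha_of A Sfh (covmx P u) j'))^T).
have RS : Rm *m Sig = 1%:M.
  apply/row_matrixP => j'; rewrite row_mul rowK row1 -scalemxAl.
  case: (RI j') => tpos rid _ _; rewrite rid scalerA div1r mulVf ?scale1r //.
  by rewrite gt_eqF.
have uSig : Sig \in unitmx by case: (mulmx1_unit RS).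
have iS : invmx Sig = Rm by rewrite -[invmx Sig]mul1mx -RS -mulmxA mulmxV // mulmx1.
rewrite iS.
case: (RI j) => tpos rid Smpd Ss.
have hyL : forall l, y l \in Lfun P 2%:E by exact: model_y_L2.
have risk : forall be : 'cV[R]_p, pred_risk P y j be = (qform Sig (wvec j be))%:E.
  move=> be; rewrite /pred_risk.
  transitivity ('E_P[(fun w => (\sum_l (y l w - fine 'E_P[y l]) * wvec j be l 0) ^+ 2)%R])%E.
    congr ('E_P[_])%E; apply/funext => w; congr (_ ^+ 2).
    rewrite (bigD1_ord j) //= !mxE unlift_none mulr1; congr (_ + _).
    by rewrite -sumrN; apply: eq_bigr => i _; rewrite !mxE liftK mulrN.
  rewrite risk_eq // /Sig -hy_eq qformE; congr EFin.
  by apply: eq_bigr => l _; apply: eq_bigr => m _; rewrite [covmx P y l m]mxE.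
have Qsplit : forall be : 'cV[R]_p, qform Sig (wvec j be) =
    qform Sig (wvec j (alpha_of A Sfh (covmx P u) j))
    + qform (row' j (col' j Sig)) (alpha_of A Sfh (covmx P u) j - be).
  move=> be.
  have -> : wvec j be = wvec j (alpha_of A Sfh (covmx P u) j)
      + (wvec j be - wvec j (alpha_of A Sfh (covmx P u) j)) by rewrite addrC subrK.
  apply: qform_split rid Ss _ _.
    by rewrite mxEB !wvec_j subrr.
  by move=> i; rewrite !mxEB !wvec_lift opprK addrC.
split.
  by rewrite !mxE unlift_none mulr1.
split.
  split.
    move=> H; have := H (alpha_of A Sfh (covmx P u) j).
    rewrite !risk lee_fin (Qsplit a0) => hle.
    set v := alpha_of A Sfh (covmx P u) j - a0 in hle.
    have q0 : qform (row' j (col' j Sig)) v <= 0 by lra.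
    have hv := Smpd v.
    have : (v^T *m v) 0 0 = 0.
      apply/eqP; rewrite eq_le vtv_ge0 andbT.
      rewrite -(pmulr_rle0 _ hc); exact: le_trans hv q0.
    move/vtv_eq0 => /eqP; rewrite /v subr_eq0 => /eqP ->. by [].
  move=> -> be; rewrite !risk lee_fin (Qsplit be) lerDl.
  apply: le_trans (Smpd _); apply: mulr_ge0; [exact: ltW | exact: vtv_ge0].
apply/matrixP => z i; rewrite (ord1 z) !mxE liftK mulrN mulNr; congr (- (_ * _)).
by rewrite /alpha_of mxE.
Qed.
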